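(* Let $E$ be a set and $\sigma = (\sigma_I)_{I \in \mathcal{F}(E)}$ a virtual permutation of $E$. Let $x, y \in E$. Then exactly one of the following holds: (a) for every finite $I \subset E$ containing $x$ and $y$, the elements $x$ and $y$ lie in the same cycle of $\sigma_I$; (b) for every finite $I \subset E$ containing $x$ and $y$, the elements $x$ and $y$ lie in different cycles of $\sigma_I$. Moreover, the relation ''$x$ and $y$ satisfy (a)'' is an equivalence relation on $E$.
   Context: $\mathcal{F}(E)$ denotes the set of finite subsets of $E$, and $\Sigma_I$ the symmetric group of a finite set $I$. For finite $I \subset J$ and a permutation $\tau$ of $J$, ''removing the elements of $J\setminus I$ from the cycle structure of $\tau$'' produces the permutation $\pi_{J,I}(\tau)$ of $I$ defined by $\pi_{J,I}(\tau)(x) = \tau^m(x)$ where $m \geq 1$ is the smallest integer with $\tau^m(x) \in I$. A virtual permutation of $E$ is a family $(\sigma_I)_{I \in \mathcal{F}(E)}$ with $\sigma_I \in \Sigma_I$ and $\sigma_I = \pi_{J,I}(\sigma_J)$ whenever $I \subset J$ are finite subsets of $E$. *)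

(* Defs.v *)
From mathcomp Require Import all_boot.
From mathcomp Require Import boolp classical_sets cardinality.
Set Implicit Arguments. Unset Strict Implicit. Unset Printing Implicit Defensive.
Local Open Scope classical_set_scope.

(* A permutation of I is represented by a function f : E -> E whose
   restriction to I is a bijection of I (values outside I are irrelevant). *)
Definition is_perm_of {E : Type} (I : set E) (f : E -> E) : Prop :=
  (forall x, I x -> I (f x)) /\
  (forall x y, I x -> I y -> f x = f y -> x = y) /\
  (forall y, I y -> exists2 x, I x & f x = y).

Definition first_return {E : Type} (I : set E) (tau : E -> E) (x : E) (z : E) : Prop :=
  exists m : nat, (0 < m)%N /\ I (iter m tau x) /\
    (forall k : nat, (0 < k)%N -> (k < m)%N -> ~ I (iter k tau x)) /\
    z = iter m tau x.

Definition virtual_permutation {E : Type} (sigma : set E -> E -> E) : Prop :=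
  (forall I : set E, finite_set I -> is_perm_of I (sigma I)) /\
  (forall I J : set E, finite_set I -> finite_set J -> I `<=` J ->
     forall x, I x -> first_return I (sigma J) x (sigma I x)).

Definition same_cycle {E : Type} (f : E -> E) (x y : E) : Prop :=
  exists k : nat, iter k f x = y.

Definition cycle_related {E : Type} (sigma : set E -> E -> E) (x y : E) : Prop :=
  forall I : set E, finite_set I -> I x -> I y -> same_cycle (sigma I) x y.

(* Main.v *)
Require Import Defs.
From mathcomp Require Import all_boot.
From mathcomp Require Import boolp classical_sets cardinality.
From mathcomp Require Import zify.
Local Open Scope classical_set_scope.
Set Implicit Arguments.

Lemma iter_in {E : Type} (I : set E) f x : is_perm_of I f -> I x ->
  forall k, I (iter k f x).
Proof. move=> [h _] Ix; elim=> [|k IH] //=; exact: h. Qed.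

Lemma iter_cancel {E : Type} (I : set E) f : is_perm_of I f ->
  forall i a b, I a -> I b -> iter i f a = iter i f b -> a = b.
Proof.
move=> hp; elim=> [|i IH] a b Ia Ib //= e.
apply: (IH a b Ia Ib); have [_ [hi _]] := hp.
exact: (hi _ _ (iter_in _ hp Ia i) (iter_in _ hp Ib i) e).
Qed.

Lemma periodic {E : Type} (I : set E) f x : finite_set I -> is_perm_of I f ->
  I x -> exists2 p, (0 < p)%N & iter p f x = x.
Proof.
move=> fI hp Ix.
have [ij|nij] := pselect (exists i j, (i < j)%N /\ iter i f x = iter j f x).
  case: ij => i [j [lij e]].
  exists (j - i)%N; first by rewrite subn_gt0.
  apply: (@iter_cancel _ I f hp i); [exact: iter_in|done|].
  by rewrite -iterD subnKC ?e // ltnW.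
exfalso; apply: infinite_nat.
have -> : [set: nat] = (fun k => iter k f x) @^-1` I.
  by apply/seteqP; split=> k //= _; exact: iter_in.
apply: finite_preimage => // i j _ _ e.
case: (ltngtP i j) => // lij; exfalso; apply: nij.
  by exists i, j.
by exists j, i.
Qed.

Lemma iter_mul {E : Type} (f : E -> E) x p : iter p f x = x ->
  forall n, iter (n * p) f x = x.
Proof. move=> hp; elim=> [|n IH] //; by rewrite mulSn iterD IH hp. Qed.

Section Key.
Variables (E : Type) (sigma : set E -> E -> E).
Hypothesis vp : virtual_permutation sigma.

Lemma key_fwd I J : finite_set I -> finite_set J -> I `<=` J ->
  forall x, I x -> forall k, exists m, iter k (sigma I) x = iter m (sigma J) x.
Proof.
move=> fI fJ IJ x Ix; elim=> [|k [m IH]]; first by exists 0%N.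
have Ik : I (iter k (sigma I) x) by apply: (iter_in _ (proj1 vp I fI)).
rewrite iterS; case: (proj2 vp I J fI fJ IJ _ Ik) => m' [_ [_ [_ ->]]].
by exists (m' + m)%N; rewrite iterD -IH.
Qed.

Lemma key_bwd I J : finite_set I -> finite_set J -> I `<=` J ->
  forall k x y, I x -> I y -> iter k (sigma J) x = y -> same_cycle (sigma I) x y.
Proof.
move=> fI fJ IJ k; elim: k {-2}k (leqnn k) => [|n IH] k lk x y Ix Iy e.
  by move: lk; rewrite leqn0 => /eqP k0; subst k; exists 0%N.
case: k lk e => [|k] lk e; first by exists 0%N.
case: (proj2 vp I J fI fJ IJ _ Ix) => m [m0 [Im [mmin ex]]].
have lmk : (m <= k.+1)%N.
  rewrite leqNgt; apply/negP => h; apply: (mmin k.+1) => //; by rewrite e.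
have Isx : I (sigma I x) by case: (proj1 vp I fI) => h _; exact: h.
have [k' ek'] : same_cycle (sigma I) (sigma I x) y.
  apply: (IH (k.+1 - m)%N) => //.
    by move: lk m0; clear; lia.
  by rewrite ex -iterD subnK.
by exists k'.+1; rewrite iterSr.
Qed.

Lemma transfer I J x y : finite_set I -> finite_set J -> I `<=` J -> I x -> I y ->
  same_cycle (sigma I) x y <-> same_cycle (sigma J) x y.
Proof.
move=> fI fJ IJ Ix Iy; split.
  case=> k e; case: (key_fwd fI fJ IJ _ Ix k) => m em; exists m; by rewrite -em.
case=> k e; exact: (key_bwd fI fJ IJ _ _ Ix Iy e).
Qed.

Lemma transfer2 I J x y : finite_set I -> finite_set J -> I x -> I y -> J x -> J y ->
  same_cycle (sigma I) x y -> same_cycle (sigma J) x y.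
Proof.
move=> fI fJ Ix Iy Jx Jy h.
have fK : finite_set (I `|` J) by rewrite finite_setU.
apply/(transfer _ _ fJ fK (@subsetUr _ I J) Jx Jy).
by apply/(transfer _ _ fI fK (@subsetUl _ I J) Ix Iy).
Qed.

End Key.

Theorem proposition2p5 (E : Type) (sigma : set E -> E -> E) :
  virtual_permutation sigma ->
  (forall x y : E,
     let A := forall I : set E, finite_set I -> I x -> I y ->
                same_cycle (sigma I) x y in
     let B := forall I : set E, finite_set I -> I x -> I y ->
                ~ same_cycle (sigma I) x y in
     (A \/ B) /\ ~ (A /\ B)) /\
  ((forall x : E, cycle_related sigma x x) /\
   (forall x y : E, cycle_related sigma x y -> cycle_related sigma y x) /\
   (forall x y z : E, cycle_related sigma x y -> cycle_related sigma y z ->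
      cycle_related sigma x z)).
Proof.
move=> vp; split.
  move=> x y A B; split.
    have [hB|nB] := pselect B; first by right.
    left; move=> I fI Ix Iy.
    have [I0 [fI0 [I0x [I0y h]]]] : exists I0, finite_set I0 /\ I0 x /\ I0 y /\
        same_cycle (sigma I0) x y.
      apply: contrapT => hn; apply: nB => I0 fI0 I0x I0y hs; apply: hn.
      by exists I0.
    exact: (transfer2 vp fI0 fI I0x I0y Ix Iy h).
  case=> hA hB.
  have f2 := finite_set2 x y.
  by apply: (hB _ f2 _ _ (hA _ f2 _ _)); [left|right|left|right].
split; first by move=> x I _ _ _; exists 0%N.
split.
  move=> x y h I fI Iy Ix; case: (h I fI Ix Iy) => k e.
  case: (periodic _ fI (proj1 vp I fI) Ix) => p p0 ep.
  exists (k * p - k)%N.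
  rewrite -e -iterD subnK; first exact: iter_mul.
  by rewrite leq_pmulr.
move=> x y z hxy hyz I fI Ix Iz.
have fK : finite_set (I `|` [set y]) by rewrite finite_setU; split=> //; exact: finite_set1.
have Kx : (I `|` [set y]) x by left.
have Ky : (I `|` [set y]) y by right.
have Kz : (I `|` [set y]) z by left.
case: (hxy _ fK Kx Ky) => k1 e1; case: (hyz _ fK Ky Kz) => k2 e2.
apply/(transfer vp _ _ fI fK (@subsetUl _ I [set y]) Ix Iz).
by exists (k2 + k1)%N; rewrite iterD e1.
Qed.
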